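(* Let $n \geq 1$ and let $f:\{1,\ldots,n\}\to\{1,\ldots,n\}$ be any (total) function. Then there exists a well-formed compact-notation word $w$ over the points $\{1,\ldots,n\}$ (as defined in the context) such that $\mathcal{I}(w)=f$, i.e.\ every transformation of $\{1,\ldots,n\}$ can be written in the compact notation.
   Context: Compact notation. Fix $n\ge 1$. Words are over the terminal symbols \texttt{[}, \texttt{]}, \texttt{(}, \texttt{)}, \texttt{,}, \texttt{|} and symbols for the points $1,\ldots,n$. They are generated by the context-free grammar with start symbol $S$ and nonterminals $C$ (components), $N$ (nontrivial trees), $T$ (trees), $P$ (points): $S \to C^+ \mid \texttt{()}$; $C \to \texttt{(}\,T_1\texttt{,}T_2\texttt{,}\ldots\texttt{,}T_k\,\texttt{)}$ with $k\ge 2$, or $C\to N$; $N \to \texttt{[}\,T_1\texttt{,}\ldots\texttt{,}T_k\,\texttt{|}\,P\,\texttt{]}$ with $k\ge 2$ (a ``splat''), or $N \to \texttt{[}\,T_1\texttt{,}\ldots\texttt{,}T_k\,\texttt{]}$ with $k\ge 2$ (a ``conveyor belt''); $T \to N \mid P$; $P \to 1\mid 2\mid\cdots\mid n$. A word is well-formed if it is generated by this grammar and each point $1,\ldots,n$ occurs in it at most once. Semantics. Maps are represented as sets of pairs $(p,q)$ meaning $p\mapsto q$. The root of a tree is defined by $r(p)=p$ for a point $p$, $r(\texttt{[}T_1\texttt{,}\ldots\texttt{,}T_k\texttt{|}p\texttt{]})=p$, and $r(\texttt{[}T_1\texttt{,}\ldots\texttt{,}T_k\texttt{]})=r(T_k)$.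 Interpretation $\mathcal{I}$: for a point, $\mathcal{I}(P)=\varnothing$; for a splat, $\mathcal{I}(\texttt{[}T_1\texttt{,}\ldots\texttt{,}T_k\texttt{|}p\texttt{]})=\bigcup_{i=1}^k\mathcal{I}(T_i)\cup\{(r(T_i),p):1\le i\le k\}$; for a conveyor belt, $\mathcal{I}(\texttt{[}T_1\texttt{,}\ldots\texttt{,}T_k\texttt{]})=\bigcup_{i=1}^k\mathcal{I}(T_i)\cup\{(r(T_i),r(T_{i+1})):1\le i<k\}$; for a cycle component, $\mathcal{I}(\texttt{(}T_1\texttt{,}\ldots\texttt{,}T_k\texttt{)})=\bigcup_{i=1}^k\mathcal{I}(T_i)\cup\{(r(T_i),r(T_{i+1})):1\le i<k\}\cup\{(r(T_k),r(T_1))\}$; a component $C\to N$ has $\mathcal{I}(C)=\mathcal{I}(N)$. For the whole word: $\mathcal{I}(\texttt{()})$ is the identity map of $\{1,\ldots,n\}$, and if $w = C_1\cdots C_k$ then $\mathcal{I}(w)=\bigcup_{i=1}^k\mathcal{I}(C_i)\cup\{(p,p): p\in\{1,\ldots,n\}\text{ has no image in any }\mathcal{I}(C_i)\}$. For a well-formed word this set of pairs is the graph of a total function $\{1,\ldots,n\}\to\{1,\ldots,n\}$, which is identified with $\mathcal{I}(w)$. *)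

(* Defs.v *)
From mathcomp Require Import all_boot.
Set Implicit Arguments. Unset Strict Implicit. Unset Printing Implicit Defensive.

(* Trees T (nonterminal T): a point P, a splat [T1,...,Tk|p], or a conveyor
   belt [T1,...,Tk].  (The k >= 2 condition is part of well-formedness.) *)
Inductive tree : Type :=
| Pt of nat
| Splat of seq tree & nat
| Belt of seq tree.

(* Components C: a cycle (T1,...,Tk) or a nontrivial tree N. *)
Inductive comp : Type :=
| Cyc of seq tree
| Nt of tree.

(* Words S: either "()" or a nonempty sequence of components. *)
Inductive word : Type :=
| WId
| WComps of seq comp.

Fixpoint root (t : tree) : nat :=
  match t with
  | Pt p => p
  | Splat _ p => p
  | Belt ts =>
      (fix lastroot (ts : seq tree) : nat :=
         match ts with
         | [::] => 0
         | [:: t'] => root t'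
         | _ :: ts' => lastroot ts'
         end) ts
  end.

Fixpoint consec (s : seq nat) : seq (nat * nat) :=
  match s with
  | x :: ((y :: _) as s') => (x, y) :: consec s'
  | _ => [::]
  end.

(* Interpretation of a tree as a set (list) of pairs (p, q) meaning p |-> q *)
Fixpoint itree (t : tree) : seq (nat * nat) :=
  match t with
  | Pt _ => [::]
  | Splat ts p =>
      (fix go (ts : seq tree) : seq (nat * nat) :=
         match ts with
         | [::] => [::]
         | t' :: ts' => itree t' ++ (root t', p) :: go ts'
         end) ts
  | Belt ts =>
      (fix go (ts : seq tree) : seq (nat * nat) :=
         match ts with
         | [::] => [::]
         | t' :: ts' => itree t' ++ go ts'
         end) ts ++ consec (map root ts)
  end.

Definition icomp (c : comp) : seq (nat * nat) :=
  match c with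
  | Cyc ts =>
      flatten (map itree ts) ++ consec (map root ts)
        ++ [:: (root (last (Pt 0) ts), root (head (Pt 0) ts))]
  | Nt t => itree t
  end.

Definition interp_word (n : nat) (w : word) : seq (nat * nat) :=
  match w with
  | WId => [seq (p, p) | p <- iota 1 n]
  | WComps cs =>
      let P := flatten (map icomp cs) in
      P ++ [seq (p, p) | p <- iota 1 n & p \notin map fst P]
  end.

Fixpoint pts (t : tree) : seq nat :=
  match t with
  | Pt p => [:: p]
  | Splat ts p =>
      (fix go (ts : seq tree) : seq nat :=
         match ts with [::] => [::] | t' :: ts' => pts t' ++ go ts' end) ts
        ++ [:: p]
  | Belt ts =>
      (fix go (ts : seq tree) : seq nat :=
         match ts with [::] => [::] | t' :: ts' => pts t' ++ go ts' end) ts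
  end.

Definition cpts (c : comp) : seq nat :=
  match c with Cyc ts => flatten (map pts ts) | Nt t => pts t end.

Definition wpts (w : word) : seq nat :=
  match w with WId => [::] | WComps cs => flatten (map cpts cs) end.

Definition is_point (n p : nat) : bool := (1 <= p <= n).

Fixpoint gtree (n : nat) (t : tree) : bool :=
  match t with
  | Pt p => is_point n p
  | Splat ts p =>
      [&& 2 <= size ts,
          (fix go (ts : seq tree) : bool :=
             match ts with [::] => true | t' :: ts' => gtree n t' && go ts' end) ts
        & is_point n p]
  | Belt ts =>
      (2 <= size ts) &&
      (fix go (ts : seq tree) : bool :=
         match ts with [::] => true | t' :: ts' => gtree n t' && go ts' end) ts
  end.

Definition gcomp (n : nat) (c : comp) : bool :=
  match c with
  | Cyc ts => (2 <= size ts) && all (gtree n) ts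
  | Nt t => (if t is Pt _ then false else true) && gtree n t
  end.

Definition gword (n : nat) (w : word) : bool :=
  match w with
  | WId => true
  | WComps cs => (0 < size cs) && all (gcomp n) cs
  end.

Definition well_formed (n : nat) (w : word) : bool :=
  gword n w && uniq (wpts w).

(* Main.v *)
Require Import Defs.
From mathcomp Require Import all_boot zify.
Set Implicit Arguments. Unset Strict Implicit. Unset Printing Implicit Defensive.

Lemma uniq_flatten_map (T U : eqType) (g : T -> seq U) (L : seq T) :
  uniq L -> {in L, forall x, uniq (g x)} ->
  (forall x y z, x \in L -> y \in L -> z \in g x -> z \in g y -> x = y) ->
  uniq (flatten (map g L)).
Proof.
elim: L => [|x L IH] //= /andP[xL uL] ug dj.
rewrite cat_uniq (ug x (mem_head _ _)) /= IH //; last first.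
- by move=> a b z Ha Hb; apply: dj; rewrite inE ?Ha ?Hb orbT.
- by move=> y Hy; apply: (ug y); rewrite inE Hy orbT.
rewrite andbT; apply/hasPn => z /flatten_mapP [y yL zy]; apply/negP => zx.
have exy : x = y by apply: (dj x y z) => //; rewrite inE ?yL ?eqxx ?orbT.
by rewrite exy yL in xL.
Qed.

Lemma consec_iota (g : nat -> nat) m k a b :
  (a, b) \in consec (map g (iota m k)) <->
  exists i, [/\ m <= i, i.+1 < m + k, a = g i & b = g i.+1].
Proof.
elim: k m => [|k IH] m /=.
  split=> // [[i [H1 H2 _ _]]]; lia.
case: k IH => [|k] IH /=.
  split=> // [[i [H1 H2 _ _]]]; lia.
rewrite inE; split.
  case/orP => [/eqP [-> ->]|]; first by exists m; split => //; lia.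
  move/(IH m.+1) => [i [H1 H2 -> ->]]; exists i; split => //; lia.
move=> [i [H1 H2 Ha Hb]].
case: (ltngtP m i) => Hmi.
- apply/orP; right; apply: ((IH m.+1).2); exists i; split => //; lia.
- lia.
- by rewrite Ha Hb Hmi eqxx.
Qed.

Lemma pts_Splat ts p : pts (Splat ts p) = flatten (map pts ts) ++ [:: p].
Proof. by rewrite /=; congr (_ ++ _); elim: ts => //= t ts ->. Qed.

Lemma itree_Splat ts p :
  itree (Splat ts p) = flatten (map (fun t => itree t ++ [:: (Defs.root t, p)]) ts).
Proof. by elim: ts => //= t ts ->; rewrite -catA. Qed.

Lemma gtree_Splat k ts p :
  gtree k (Splat ts p) = [&& 2 <= size ts, all (gtree k) ts & is_point k p].
Proof. rewrite /=; do 2 f_equal; by elim: ts => //= t ts ->. Qed.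

Lemma root_last ts : Defs.root (last (Pt 0) ts) = last 0 (map Defs.root ts).
Proof. by rewrite -(last_map Defs.root). Qed.

Lemma icomp_Cyc ts : icomp (Defs.Cyc ts) = flatten (map itree ts) ++ consec (map Defs.root ts)
  ++ [:: (Defs.root (last (Pt 0) ts), Defs.root (head (Pt 0) ts))].
Proof. by []. Qed.
Lemma icomp_Nt t : icomp (Nt t) = itree t.
Proof. by []. Qed.

Section Main.
Variable n : nat.
Variable f : nat -> nat.
Hypothesis Hn : 1 <= n.
Hypothesis Hf : forall p, 1 <= p <= n -> 1 <= f p <= n.

Definition D p := 1 <= p <= n.
Definition it k x := iter k f x.

Lemma itD k x : D x -> D (it k x).
Proof. by move=> Hx; elim: k => //= k IH; apply: Hf. Qed.

Lemma itS k x : it k.+1 x = f (it k x). Proof. by []. Qed.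
Lemma itD2 k l x : it (k + l) x = it k (it l x). Proof. exact: iterD. Qed.

Definition Cycl x := exists k, 0 < k /\ it k x = x.

Lemma it_per p x : 0 < p -> it p x = x -> forall i, it i x = it (i %% p) x.
Proof.
move=> p0 Hp i.
have H : forall q, it (q * p) x = x.
  by elim=> // q IH; rewrite mulSn itD2 IH Hp.
by rewrite {1}(divn_eq i p) addnC itD2 H.
Qed.

Lemma Cyc_it x i : Cycl x -> Cycl (it i x).
Proof.
move=> [k [k0 Hk]]; exists k; split => //.
by rewrite -itD2 addnC itD2 Hk.
Qed.

Lemma Cyc_back x i : Cycl x -> exists j, it j (it i x) = x.
Proof.
move=> [p [p0 Hp]]; exists (p - i %% p).
rewrite (it_per p0 Hp i) -itD2 subnK ?Hp //.
by apply: ltnW; rewrite ltn_pmod.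
Qed.

Lemma pigeon x : D x -> exists k, [/\ 0 < k, k <= n & it k (it n x) = it n x].
Proof.
move=> Dx.
set s := map (fun i => it i x) (iota 0 n.+1).
have : ~~ uniq s.
  apply/negP => us.
  have sub : {subset s <= iota 1 n}.
    move=> y /mapP [i _ ->]; rewrite mem_iota.
    by have := itD i Dx; rewrite /D; lia.
  by have := uniq_leq_size us sub; rewrite size_map !size_iota ltnn.
move/(uniqPn 0) => [i [j [ij jn]]].
rewrite size_map size_iota in jn.
rewrite !(nth_map 0) ?size_iota // ?(ltn_trans ij jn) // !nth_iota ?(ltn_trans ij jn) // !add0n => Hij.
exists (j - i); split; [lia|lia|].
have -> : n = (n - i) + i by lia.
rewrite -!itD2 (_ : j - i + (n - i + i) = (n - i) + j); last by lia.
by rewrite itD2 -Hij -itD2.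
Qed.

Definition cycb x := has (fun y => it n y == x) (iota 1 n).

Lemma cycb_bound x : cycb x -> exists k, [/\ 0 < k, k <= n & it k x = x].
Proof.
move/hasP => [y]; rewrite mem_iota => Hy /eqP <-.
apply: pigeon; rewrite /D; lia.
Qed.

Lemma cycbP x : D x -> cycb x <-> Cycl x.
Proof.
move=> Dx; split.
  by move/cycb_bound => [k [k0 _ Hk]]; exists k.
move=> [k [k0 Hk]]; apply/hasP; exists (it (n * k - n) x).
  by rewrite mem_iota; have := itD (n * k - n) Dx; rewrite /D; lia.
rewrite -itD2 subnKC; last by rewrite leq_pmulr.
by rewrite (it_per k0 Hk) modnMl.
Qed.


Definition per x := (find (fun k => it k.+1 x == x) (iota 0 n)).+1.

Lemma per_spec x : cycb x ->
  [/\ 0 < per x, per x <= n, it (per x) x = x & forall k, 0 < k < per x -> it k x != x].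
Proof.
move=> /cycb_bound [k [k0 kn Hk]].
have hs : has (fun k => it k.+1 x == x) (iota 0 n).
  apply/hasP; exists k.-1; first by rewrite mem_iota; lia.
  by rewrite prednK // Hk.
have := hs; rewrite has_find size_iota => fn.
split => //.
  have := nth_find 0 hs; rewrite nth_iota // add0n.
  by move/eqP.
move=> j /andP [j0 jp].
rewrite /per in jp.
have := @before_find _ 0 (fun k => it k.+1 x == x) (iota 0 n) j.-1.
rewrite nth_iota; last by lia.
rewrite add0n prednK // => -> //; lia.
Qed.

Definition orb x := map (fun i => it i x) (iota 0 (per x)).

Lemma orb_uniq x : cycb x -> uniq (orb x).
Proof.
move=> /per_spec [p0 pn Hp Hmin].
rewrite map_inj_in_uniq ?iota_uniq //.
move=> i j; rewrite !mem_iota !add0n => /andP [_ ip] /andP [_ jp] Hij.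
wlog lij : i j ip jp Hij / i <= j.
  move=> H; case: (leqP i j) => l; first exact: H.
  by symmetry; apply: H => //; apply: ltnW.
case: (ltngtP i j) lij => // lij _.
have := Hmin (per x - j + i).
rewrite (_ : 0 < _ < _); last by lia.
move/(_ isT)/negP; elim.
by rewrite itD2 Hij -itD2 subnK ?Hp // ltnW.
Qed.

Lemma mem_orb x y : cycb x -> (y \in orb x) <-> exists i, y = it i x.
Proof.
move=> /per_spec [p0 pn Hp Hmin]; split.
  by move/mapP => [i _ ->]; exists i.
move=> [i ->]; rewrite (it_per p0 Hp); apply/mapP; exists (i %% per x) => //.
by rewrite mem_iota add0n ltn_pmod.
Qed.

Definition rep x := cycb x && all (fun k => x <= it k x) (iota 0 n).

Lemma rep_le x k : rep x -> x <= it k x.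
Proof.
move=> /andP [cx /allP H].
have [p0 pn Hp _] := per_spec cx.
rewrite (it_per p0 Hp); apply: H; rewrite mem_iota add0n.
exact: leq_trans (ltn_pmod _ _) pn.
Qed.

Lemma rep_uniq c1 c2 y : D c1 -> D c2 -> rep c1 -> rep c2 ->
  y \in orb c1 -> y \in orb c2 -> c1 = c2.
Proof.
move=> D1 D2 r1 r2.
have c1c : cycb c1 by case/andP: r1.
have c2c : cycb c2 by case/andP: r2.
move=> /(mem_orb _ c1c) [i1 ->] /(mem_orb _ c2c) [i2 E].
have C1 : Cycl c1 by apply/cycbP.
have C2 : Cycl c2 by apply/cycbP.
have [j1 H1] := Cyc_back i1 C1.
have [j2 H2] := Cyc_back i2 C2.
apply/eqP; rewrite eqn_leq; apply/andP; split.
  by rewrite -H2 -E -itD2; apply: rep_le.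
by rewrite -H1 E -itD2; apply: rep_le.
Qed.

Lemma rep_exists x : D x -> cycb x -> exists c, [/\ D c, rep c & x \in orb c].
Proof.
move=> Dx cx.
have Cx : Cycl x by apply/cycbP.
pose P m := has (fun k => it k x == m) (iota 0 n).
have exP : exists m, P m by exists x; apply/hasP; exists 0 => //; rewrite mem_iota; lia.
case: (ex_minnP exP) => c /hasP [k0 k0n /eqP Hc] Hmin.
have Dc : D c by rewrite -Hc; apply: itD.
have Cc : Cycl c by rewrite -Hc; apply: Cyc_it.
have cc : cycb c by apply/cycbP.
exists c; split => //.
  apply/andP; split => //; apply/allP => k _; apply: Hmin.
  have [p0 pn Hp _] := per_spec cx.
  apply/hasP; exists ((k + k0) %% per x).
    by rewrite mem_iota add0n; exact: leq_trans (ltn_pmod _ _) pn.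
  by rewrite -(it_per p0 Hp) itD2 Hc.
apply/mem_orb => //.
have [j Hj] := Cyc_back k0 Cx; exists j; by rewrite -Hc Hj.
Qed.


Definition children q := [seq p <- iota 1 n | (f p == q) && ~~ cycb p].

Fixpoint T m q : tree :=
  match m with
  | 0 => Pt q
  | m'.+1 =>
    match children q with
    | [::] => Pt q
    | [:: p] => Belt [:: T m' p; Pt q]
    | ps => Splat (map (T m') ps) q
    end
  end.

Lemma root_T m q : Defs.root (T m q) = q.
Proof. case: m => //= m; by case: (children q) => [|p [|p' ps]]. Qed.

Lemma Splat_T m q ps :
  pts (Splat (map (T m) ps) q) = flatten (map (fun p => pts (T m p)) ps) ++ [:: q] /\
  itree (Splat (map (T m) ps) q) = flatten (map (fun p => itree (T m p) ++ [:: (p, q)]) ps).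
Proof.
rewrite pts_Splat itree_Splat -!map_comp; split => //.
by congr flatten; apply: eq_map => t /=; rewrite root_T.
Qed.

Lemma T_S m q : children q != [::] ->
  pts (T m.+1 q) = flatten (map (fun p => pts (T m p)) (children q)) ++ [:: q] /\
  itree (T m.+1 q) = flatten (map (fun p => itree (T m p) ++ [:: (p, q)]) (children q)).
Proof.
rewrite [T m.+1 q]/=; case: (children q) => [|p [|p' ps]] // _.
- by rewrite /= !cats0 root_T.
- exact: (Splat_T m q [:: p, p' & ps]).
Qed.

Lemma child_mem p q : p \in children q -> [/\ D p, f p = q & ~~ cycb p].
Proof. by rewrite mem_filter mem_iota => /andP [/andP [/eqP -> ->] H]. Qed.

Lemma child_not_it p q d : p \in children q -> p = it d q -> False.
Proof.
move=> /child_mem [Dp fp ncp] E.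
have Cq : Cycl q by exists d.+1; split => //; rewrite itS -E.
have : Cycl p by rewrite E; apply: Cyc_it.
by move/(cycbP Dp); rewrite (negbTE ncp).
Qed.

Definition reach x q := exists j, it j x = q /\ forall i, i < j -> ~~ cycb (it i x).

Lemma T_pts m q x : x \in pts (T m q) -> reach x q /\ (x = q \/ D x).
Proof.
elim: m q x => [|m IH] q x.
  by rewrite /= inE => /eqP ->; split; [exists 0|left].
case: (children q =P [::]) => [E|/eqP ne].
  have -> : T m.+1 q = Pt q by rewrite /= E.
  by rewrite /= inE => /eqP ->; split; [exists 0|left].
case: (T_S m ne) => -> _.
rewrite mem_cat inE => /orP [/flatten_mapP [p pc xp] | /eqP ->]; last first.
  by split; [exists 0|left].
have [Dp fp ncp] := child_mem pc.
have [[j [Hj Hi]] Hx] := IH p x xp.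
split; last by right; case: Hx => [->|].
exists j.+1; split; first by rewrite itS Hj.
move=> i; rewrite ltnS leq_eqVlt => /orP [/eqP ->|]; [by rewrite Hj | exact: Hi].
Qed.

Lemma T_complete m q x j : D x -> it j x = q ->
  (forall i, i < j -> ~~ cycb (it i x)) -> 0 < j -> j <= m ->
  (x, f x) \in itree (T m q).
Proof.
elim: m q j => [|m IH] q j Dx Hj Hi j0 jm; first lia.
case: j Hj Hi j0 jm => // j Hj Hi _ jm.
have pc : it j x \in children q.
  rewrite mem_filter mem_iota; have := itD j Dx; rewrite /D => Dp.
  apply/andP; split; last lia.
  by apply/andP; split; [rewrite -Hj itS | exact: Hi].
have ne : children q != [::] by apply/eqP => E; rewrite E in pc.
case: (T_S m ne) => _ ->.
apply/flatten_mapP; exists (it j x) => //.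
rewrite mem_cat; case: j Hj Hi jm pc => [|j] Hj Hi jm pc.
  by apply/orP; right; rewrite inE -Hj.
apply/orP; left; apply: (IH _ j.+1) => //.
by move=> i ij; apply: Hi; lia.
Qed.

Lemma T_sound m q a b : (a, b) \in itree (T m q) -> D a /\ b = f a.
Proof.
elim: m q => [|m IH] q //.
case: (children q =P [::]) => [E|/eqP ne].
  by have -> : T m.+1 q = Pt q by rewrite /= E.
case: (T_S m ne) => _ ->.
move/flatten_mapP => [p pc]; rewrite mem_cat inE => /orP [/IH //|/eqP [-> ->]].
by have [Dp fp _] := child_mem pc.
Qed.

Lemma T_gtree m q : D q -> gtree n (T m q).
Proof.
elim: m q => [|m IH] q Dq //.
have hall : all D (children q) by apply/allP => p /child_mem [].
rewrite [T m.+1 q]/=; case: (children q) hall => [|p [|p' ps]] hall //.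
- have Dp : D p by case/andP: hall.
  by rewrite /= IH // andbT.
- rewrite (gtree_Splat n (map (T m) [:: p, p' & ps]) q) size_map all_map; apply/and3P; split => //.
  by apply/allP => t tin /=; apply: IH; exact: (allP hall).
Qed.

Lemma T_nonPt m q : children q != [::] -> if T m.+1 q is Pt _ then false else true.
Proof. by rewrite [T m.+1 q]/=; case: (children q) => [|p [|p' ps]]. Qed.

Lemma children_disj m q p1 p2 z : p1 \in children q -> p2 \in children q ->
  z \in pts (T m p1) -> z \in pts (T m p2) -> p1 = p2.
Proof.
move=> c1 c2 /T_pts [[j1 [H1 _]] _] /T_pts [[j2 [H2 _]] _].
have [_ f1 _] := child_mem c1.
have [_ f2 _] := child_mem c2.
case: (ltngtP j1 j2) => l.
- exfalso; apply: (child_not_it c2 (d := j2 - j1.+1)).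
  by rewrite -H2 -f1 -H1 -itS -itD2; congr it; lia.
- exfalso; apply: (child_not_it c1 (d := j1 - j2.+1)).
  by rewrite -H1 -f2 -H2 -itS -itD2; congr it; lia.
- by rewrite -H1 -H2 l.
Qed.

Lemma T_uniq m q : D q -> uniq (pts (T m q)).
Proof.
elim: m q => [|m IH] q Dq //.
case: (children q =P [::]) => [E|/eqP ne].
  by have -> : T m.+1 q = Pt q by rewrite /= E.
case: (T_S m ne) => -> _.
rewrite cat_uniq /= andbT orbF; apply/andP; split.
  apply: uniq_flatten_map; first by apply: filter_uniq; apply: iota_uniq.
    by move=> p /child_mem [Dp _ _]; apply: IH.
  by move=> x y z xc yc; exact: (children_disj xc yc).
apply/negP => /flatten_mapP [p pc /T_pts [[j [Hj _]] _]].
exact: (child_not_it pc (esym Hj)).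
Qed.

Lemma cyc_disj m y1 y2 z : cycb y1 -> cycb y2 ->
  z \in pts (T m y1) -> z \in pts (T m y2) -> y1 = y2.
Proof.
move=> c1 c2 /T_pts [[j1 [H1 I1]] _] /T_pts [[j2 [H2 I2]] _].
case: (ltngtP j1 j2) => l.
- by have := I2 _ l; rewrite H1 c1.
- by have := I1 _ l; rewrite H2 c2.
- by rewrite -H1 -H2 l.
Qed.


Definition reps := [seq c <- iota 1 n | rep c && ((1 < per c) || (children c != [::]))].
Definition compo c := if 1 < per c then Defs.Cyc (map (T n) (orb c)) else Nt (T n c).
Definition cs := map compo reps.

Lemma reps_mem c : c \in reps ->
  [/\ D c, rep c, cycb c & (1 < per c) || (children c != [::])].
Proof.
rewrite mem_filter mem_iota => /andP [/andP [r h] ci].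
split => //.
by case/andP: r.
Qed.

Lemma orb_D c y : D c -> y \in orb c -> D y.
Proof. by move=> Dc /mapP [i _ ->]; apply: itD. Qed.

Lemma orb_cyc c y : D c -> cycb c -> y \in orb c -> cycb y.
Proof.
move=> Dc cc yo; apply/cycbP; first exact: orb_D yo.
move: yo => /mapP [i _ ->]; apply: Cyc_it; exact/cycbP.
Qed.

Lemma per1 c : cycb c -> ~~ (1 < per c) -> orb c = [:: c].
Proof.
move=> cc h; have [p0 _ _ _] := per_spec cc.
by rewrite /orb (_ : per c = 1) //; lia.
Qed.

Lemma mapRT m s : map Defs.root (map (T m) s) = s.
Proof. by rewrite -map_comp (eq_map (root_T m)) map_id. Qed.

Lemma icomp_CycT m s : icomp (Defs.Cyc (map (T m) s)) =
  flatten (map (fun y => itree (T m y)) s) ++ consec s ++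
  [:: (Defs.root (last (Pt 0) (map (T m) s)), Defs.root (head (Pt 0) (map (T m) s)))].
Proof. by rewrite icomp_Cyc mapRT -map_comp. Qed.

Lemma cpts_compo c : c \in reps ->
  cpts (compo c) = flatten (map (fun y => pts (T n y)) (orb c)).
Proof.
move=> /reps_mem [Dc rc cc h]; rewrite /compo; case: ifP => h1.
  by rewrite /= -map_comp.
by rewrite (per1 cc (negbT h1)) /= cats0.
Qed.

Lemma gcomp_compo c : c \in reps -> gcomp n (compo c).
Proof.
move=> /reps_mem [Dc rc cc h]; rewrite /compo; case: ifP => h1.
  have -> : gcomp n (Defs.Cyc (map (T n) (orb c))) =
    (2 <= size (map (T n) (orb c))) && all (gtree n) (map (T n) (orb c)) by [].
  rewrite size_map size_map size_iota h1 all_map; apply/allP => y yo /=.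
  by apply: T_gtree; exact: orb_D yo.
rewrite h1 /= in h.
have -> : gcomp n (Nt (T n c)) =
  (if T n c is Pt _ then false else true) && gtree n (T n c) by [].
have [n' En] : exists n', n = n'.+1 by exists n.-1; lia.
apply/andP; split; last exact: T_gtree.
by rewrite En; apply: T_nonPt.
Qed.

Lemma wf : uniq (flatten (map cpts cs)).
Proof.
rewrite /cs -map_comp; apply: uniq_flatten_map.
- by apply: filter_uniq; apply: iota_uniq.
- move=> c ci /=; rewrite cpts_compo //.
  have [Dc rc cc h] := reps_mem ci.
  apply: uniq_flatten_map; first exact: orb_uniq.
    by move=> y yo; apply: T_uniq; exact: orb_D yo.
  move=> y1 y2 z y1o y2o z1 z2; apply: (cyc_disj _ _ z1 z2); [exact: (orb_cyc Dc cc y1o) | exact: (orb_cyc Dc cc y2o)].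
- move=> c1 c2 z c1i c2i /=; rewrite !cpts_compo //.
  have [D1 r1 cc1 _] := reps_mem c1i.
  have [D2 r2 cc2 _] := reps_mem c2i.
  move=> /flatten_mapP [y1 y1o z1] /flatten_mapP [y2 y2o z2].
  have e : y1 = y2 by apply: (cyc_disj _ _ z1 z2); [exact: (orb_cyc D1 cc1 y1o) | exact: (orb_cyc D2 cc2 y2o)].
  subst y2; exact: (rep_uniq D1 D2 r1 r2 y1o y2o).
Qed.

Lemma orb_head c : cycb c -> Defs.root (head (Pt 0) (map (T n) (orb c))) = c.
Proof.
move=> cc; have [p0 _ _ _] := per_spec cc.
by rewrite /orb; case: (per c) p0 => //= p' _; rewrite root_T.
Qed.

Lemma orb_last c : cycb c -> Defs.root (last (Pt 0) (map (T n) (orb c))) = it (per c).-1 c.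
Proof.
move=> cc; have [p0 _ _ _] := per_spec cc.
rewrite root_last mapRT -nth_last /orb size_map size_iota (nth_map 0) ?size_iota ?nth_iota //; lia.
Qed.

Lemma comp_sound c a b : c \in reps -> (a, b) \in icomp (compo c) -> D a /\ b = f a.
Proof.
move=> /reps_mem [Dc rc cc h]; rewrite /compo; case: ifP => h1; last by rewrite icomp_Nt; exact: T_sound.
rewrite icomp_CycT mem_cat => /orP [|].
  move=> /flatten_mapP [y yo]; exact: T_sound.
rewrite mem_cat => /orP [|].
- move/consec_iota => [i [_ _ -> ->]]; split; [exact: itD | by []].
- rewrite inE orb_last // orb_head // => /eqP [-> ->]; split; first exact: itD.
  have [p0 _ Hp _] := per_spec cc.
  by rewrite -[RHS]/(it (per c) c) Hp.
Qed.

Lemma comp_complete a : D a -> f a != a ->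
  exists2 c, c \in reps & (a, f a) \in icomp (compo c).
Proof.
move=> Da fa.
case: (boolP (cycb a)) => ca.
  have [c [Dc rc ao]] := rep_exists Da ca.
  have cc : cycb c by case/andP: rc.
  have [p0 pn Hp _] := per_spec cc.
  have h1 : 1 < per c.
    case: ltnP => // h; move: ao; rewrite per1 -?leqNgt // inE => /eqP E.
    have e1 : per c = 1 by lia.
    by move: fa; rewrite E -[f c]/(it 1 c) -{1}e1 Hp eqxx.
  have ci : c \in reps by rewrite mem_filter rc h1 mem_iota /=; move: Dc; rewrite /D; lia.
  exists c => //; rewrite /compo h1 icomp_CycT mem_cat; apply/orP; right.
  rewrite mem_cat.
  move: ao => /mapP [i]; rewrite mem_iota add0n => ip ->.
  apply/orP.
  case: (ltnP i.+1 (per c)) => hi.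
    by left; apply/consec_iota; exists i; split.
  right; rewrite inE orb_last // orb_head //.
  have ei : i = (per c).-1 by lia.
  by rewrite -itS ei prednK // Hp.
have exP : exists j, cycb (it j a).
  exists n; have [k [k0 _ Hk]] := pigeon Da.
  by apply/cycbP; [exact: itD | exists k].
case: (ex_minnP exP) => j cj jmin.
have j0 : 0 < j by case: j cj jmin => // ; rewrite (negbTE ca).
have jn : j <= n by apply: jmin; apply/cycbP; [exact: itD | ]; have [k [k0 _ Hk]] := pigeon Da; exists k.
have before : forall i, i < j -> ~~ cycb (it i a).
  by move=> i ij; apply/negP => ci; have := jmin _ ci; lia.
have Hin := T_complete (m := n) Da (erefl (it j a)) before j0 jn.
have De : D (it j a) by apply: itD.
have [c [Dc rc eo]] := rep_exists De cj.
have cc : cycb c by case/andP: rc.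
case: (boolP (1 < per c)) => h1.
  have ci : c \in reps by rewrite mem_filter rc h1 mem_iota /=; move: Dc; rewrite /D; lia.
  exists c => //; rewrite /compo h1 icomp_CycT mem_cat; apply/orP; left.
  by apply/flatten_mapP; exists (it j a).
move: eo; rewrite per1 // inE => /eqP E.
have chc : it j.-1 a \in children c.
  rewrite mem_filter mem_iota -itS prednK // -E eqxx before /=; last by lia.
  by have := itD j.-1 Da; rewrite /D; lia.
have ci : c \in reps.
  rewrite mem_filter rc mem_iota /=; apply/andP; split.
    by apply/orP; right; apply/eqP => e; rewrite e in chc.
  by move: Dc; rewrite /D; lia.
by exists c => //; rewrite /compo (negbTE h1) icomp_Nt -E.
Qed.

Lemma main_sec : exists w : word,
    well_formed n w /\
    (forall p q : nat, (p, q) \in interp_word n w <-> (1 <= p <= n /\ q = f p)).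
Proof.
set P := flatten (map icomp cs).
have sound : forall a b, (a, b) \in P -> D a /\ b = f a.
  move=> a b; rewrite /P /cs -map_comp => /flatten_mapP [c ci]; exact: comp_sound.
have compl : forall a, D a -> f a != a -> (a, f a) \in P.
  move=> a Da fa; have [c ci H] := comp_complete Da fa.
  by rewrite /P /cs -map_comp; apply/flatten_mapP; exists c.
have key : forall p q, (p, q) \in interp_word n (WComps cs) <-> (1 <= p <= n /\ q = f p).
  move=> p q; rewrite /= mem_cat -/P; split.
    case/orP => [/sound [Dp ->] // | /mapP [x]].
    rewrite mem_filter mem_iota => /andP [nx xr] [-> ->].
    split; first lia.
    case: (f x =P x) => // /eqP ne; exfalso.
    have Dx : D x by rewrite /D; lia.
    by move: nx; rewrite (map_f fst (compl x Dx ne)).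
  move=> [Dp ->]; case: (f p =P p) => [E|/eqP ne]; last by rewrite compl.
  apply/orP; case: (boolP (p \in map fst P)) => [/mapP [[a b] ab /= Ea]| nP].
    left; have [_ Hb] := sound a b ab; by rewrite Ea -Hb.
  right; apply/mapP; exists p; last by rewrite E.
  by rewrite mem_filter mem_iota nP /=; lia.
case E: cs key => [|c cs'] key.
  exists WId; split => // p q; rewrite -key.
  have Hf1 : [seq x <- iota 1 n | x \notin [::]] = iota 1 n by apply/all_filterP/allP.
  by rewrite /interp_word /= Hf1.
exists (WComps cs); split; last by rewrite E.
have -> : well_formed n (WComps cs) =
  [&& 0 < size cs, all (gcomp n) cs & uniq (flatten (map cpts cs))] by rewrite /well_formed /= andbA.
rewrite wf andbT; apply/andP; split; first by rewrite E.
by rewrite /cs all_map; apply/allP => x xi; apply: gcomp_compo.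
Qed.

End Main.

Theorem mainTheorem1 (n : nat) (f : nat -> nat) :
  1 <= n ->
  (forall p, 1 <= p <= n -> 1 <= f p <= n) ->
  exists w : word,
    well_formed n w /\
    (forall p q : nat, (p, q) \in interp_word n w <-> (1 <= p <= n /\ q = f p)).
Proof. move=> Hn Hf; exact: (main_sec Hn Hf). Qed.
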